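(* Consider an execution of the MBA protocol (described in the context) with $n\ge 3t+1$ players of which at most $t$ are malicious. If, for some component $c\in\{1,\dots,m\}$, the honest players obtain $b_c=0$ in the common bit vector $\mathbf b$ output by STEP 3, then the honest players reach $c$-agreement on a value $v\neq\bot$ in the $c$-th component of their MBA outputs.
   Context: Network model: $n$ players; every pair joined by a direct private channel; synchronous steps, instantaneous delivery; at most $t$ malicious players, honest players follow the protocol and send the same message to everyone. $\#_i^s(v,c)$ is the number of distinct players from which $i$ received in step $s$ a valid vector message whose $c$-th component is $v$ (counting its own; conflicting messages from one sender discarded, duplicates once). $c$-agreement on outputs: all honest players have the same $c$-th output component. MGC (two steps): STEP 1: each $i$ sends its initial vector $\mathbf{v}_i'\in(V\cup\{\bot\})^m$. STEP 2: each $i$ sends $\tilde{\mathbf v}_i$ with $\tilde v_{i,c}=v$ if $\#_i^1(v,c)\ge\lfloor\frac{2n}3\rfloor+1$, else $\bot$. Output: $(v_{i,c},g_{i,c})=(x,2)$ if $\#_i^2(x,c)\ge\lfloor\frac{2n}3\rfloor+1$ for some $x\ne\bot$; else $(x,1)$ if $\#_i^2(x,c)\ge\lfloor\frac n3\rfloor+1$ for some $x\ne\bot$; else $(\bot,0)$. MBBA (on bit vectors $\mathbf b_i\in\{0,1\}^m$; $\mathbf f_i$ initially zero; $H$ a random oracle, $\mathrm{SIG}_i$ unique signatures, $r$ common random string, counter $\gamma=0$): EXIT CHECK: if $\mathbf f_i$ is all ones, send $\mathbf b_i$ as final (reused by receivers in later steps), output $\mathbf b_i$, halt. STEP 1: send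 $\mathbf b_i$; for $c$ with $f_{i,c}=0$: if $\#_i^1(0,c)>\frac23n$ set $b_{i,c}=0,f_{i,c}=1$ and EXIT CHECK; else if $\#_i^1(1,c)>\frac23n$ set $b_{i,c}=1$; else $0$. STEP 2: send $\mathbf b_i$; for $c$ with $f_{i,c}=0$: if $\#_i^2(1,c)>\frac23n$ set $b_{i,c}=1,f_{i,c}=1$ and EXIT CHECK; else if $\#_i^2(0,c)>\frac23n$ set $0$; else $1$. STEP 3: send $\mathrm{SIG}_i(r\|\gamma)$ and $\mathbf b_i$; for $c$ with $f_{i,c}=0$: if $\#_i^3(0,c)>\frac23n$ set 0; else if $\#_i^3(1,c)>\frac23n$ set 1; else set $b_{i,c}$ to the $c$-th bit of $H(\min_{j\in P_i}H(\mathrm{SIG}_j(r\|\gamma)))$, $P_i$ the senders of valid STEP 3 messages to $i$; $\gamma\leftarrow\gamma+1$, go to STEP 1. MBA: each player $i$ has initial vector $\mathbf v_i'\in(V\cup\{\bot\})^m$. STEPS 1–2: run the two steps of MGC, obtaining $(\mathbf v_i,\mathbf g_i)$. STEP 3: run MBBA with initial bits $b_{i,c}=0$ if $g_{i,c}=2$ and $b_{i,c}=1$ otherwise; its output $\mathbf b$ is the output of STEP 3. OUTPUT: $o_{i,c}=v_{i,c}$ if $b_{c}=0$ and $o_{i,c}=\bot$ if $b_{c}=1$. *)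

(* Defs.v *)
(* Model of one execution of MBA (MGC + MBBA) in the
   synchronous full-information model with a set H of honest players. *)
From mathcomp Require Import all_boot.

Section MBA.

(* V : value set (bottom is represented by None : option V);
   n players 'I_n, vectors of length m indexed by 'I_m;
   H : the set of honest players. *)
Variables (V : eqType) (n m : nat) (H : {set 'I_n}).

(* first element of s satisfying p (used to select the value meeting a
   threshold; such a value is unique whenever it matters). *)
Definition first_sat {T : Type} (p : pred T) (s : seq T) : option T :=
  ohead (filter p s).

Variable vinit : 'I_n -> 'I_m -> option V.
(* adv1 j i / adv2 j i : the (possibly absent/invalid = None) vector message
   that malicious player j sends to player i in MGC step 1 / step 2
   (conflicting messages are discarded, so at most one message per
   sender and receiver). *)
Variables adv1 adv2 : 'I_n -> 'I_n -> option ('I_m -> option V).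

(* #_i(x,c) for a message table msg (msg j i = message from j received by i) *)
Definition cntV (msg : 'I_n -> 'I_n -> option ('I_m -> option V))
  (i : 'I_n) (x : option V) (c : 'I_m) : nat :=
  #|[set j : 'I_n | if msg j i is Some w then w c == x else false]|.

Definition candsV (msg : 'I_n -> 'I_n -> option ('I_m -> option V))
  (i : 'I_n) (c : 'I_m) : seq (option V) :=
  pmap (fun j => omap (fun w => w c) (msg j i)) (enum 'I_n).

Definition msg1 (j i : 'I_n) : option ('I_m -> option V) :=
  if j \in H then Some (vinit j) else adv1 j i.

Definition tilde (i : 'I_n) (c : 'I_m) : option V :=
  odflt None
    (first_sat (fun x => (2 * n) %/ 3 < cntV msg1 i x c) (candsV msg1 i c)).

Definition msg2 (j i : 'I_n) : option ('I_m -> option V) :=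
  if j \in H then Some (tilde j) else adv2 j i.

Definition mgc_out (i : 'I_n) (c : 'I_m) : option V * nat :=
  match first_sat (fun x => (x != None) && ((2 * n) %/ 3 < cntV msg2 i x c))
                  (candsV msg2 i c) with
  | Some x => (x, 2)
  | None =>
    match first_sat (fun x => (x != None) && (n %/ 3 < cntV msg2 i x c))
                    (candsV msg2 i c) with
    | Some x => (x, 1)
    | None => (None, 0)
    end
  end.

(* local state of a player: bits b_i, flags f_i, halted? *)
Record bstate := BState { bb : 'I_m -> bool; bf : 'I_m -> bool; bh : bool }.

(* advB k j i : the message (bit vector; in a STEP 3 it is accompanied by
   j's unique valid signature) that malicious j sends to i in global MBBA
   step k (k = 0,1,2,... ; step type k %% 3, coin counter gamma = k %/ 3);
   None = no valid message. *)
Variable advB : nat -> 'I_n -> 'I_n -> option ('I_m -> bool).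
(* Hs j g = H(SIG_j(r || g)) (as a number); Hb h c = c-th bit of H(h). *)
Variable Hs : 'I_n -> nat -> nat.
Variable Hb : nat -> 'I_m -> bool.

(* message received by i from j in step k; an honest halted player's
   final message is reused (its state is frozen). *)
Definition msgB (st : 'I_n -> bstate) (k : nat) (j i : 'I_n)
  : option ('I_m -> bool) :=
  if j \in H then Some (bb (st j)) else advB k j i.

Definition cntB (st : 'I_n -> bstate) (k : nat) (i : 'I_n) (x : bool)
  (c : 'I_m) : nat :=
  #|[set j : 'I_n | if msgB st k j i is Some w then w c == x else false]|.

Definition gt_two_thirds (a : nat) : bool := 2 * n < 3 * a.

(* P_i : senders of valid STEP 3 messages to i *)
Definition coinP (st : 'I_n -> bstate) (k : nat) (i : 'I_n) : {set 'I_n} :=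
  [set j : 'I_n | if j \in H then ~~ bh (st j) else isSome (advB k j i)].

(* neutral element for the minimum below (an upper bound of all Hs j g);
   irrelevant since P_i is nonempty whenever the coin is used *)
Definition maxHs (g : nat) : nat := \max_(j < n) Hs j g.

Definition coin (st : 'I_n -> bstate) (k : nat) (i : 'I_n) (c : 'I_m) : bool :=
  Hb (\big[minn/maxHs (k %/ 3)]_(j in coinP st k i) Hs j (k %/ 3)) c.

Definition upd (st : 'I_n -> bstate) (k : nat) (i : 'I_n) (c : 'I_m)
  : bool * bool :=
  let b := bb (st i) c in
  if bf (st i) c then (b, true) else
  let z := gt_two_thirds (cntB st k i false c) in
  let o := gt_two_thirds (cntB st k i true c) in
  match k %% 3 with
  | 0 => if z then (false, true) else if o then (true, false) else (false, false)
  | 1 => if o then (true, true) else if z then (false, false) else (true, false)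
  | _ => if z then (false, false) else if o then (true, false)
         else (coin st k i c, false)
  end.

Definition bstep (st : 'I_n -> bstate) (k : nat) (i : 'I_n) : bstate :=
  if bh (st i) then st i else
  let nb := fun c => (upd st k i c).1 in
  let nf := fun c => (upd st k i c).2 in
  BState nb nf ([exists c, nf c && ~~ bf (st i) c] && [forall c, nf c]).

Definition binit (i : 'I_n) : bstate :=
  BState (fun c => (mgc_out i c).2 != 2) (fun _ => false) false.

Fixpoint bexec (k : nat) : 'I_n -> bstate :=
  match k with
  | 0 => binit
  | k'.+1 => fun i => bstep (bexec k') k' i
  end.

Definition mba_out (K : nat) (i : 'I_n) (c : 'I_m) : option V :=
  if bb (bexec K i) c then None else (mgc_out i c).1.

End MBA.

(* Main.v *)
Require Import Defs.
From mathcomp Require Import all_boot.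
From mathcomp Require Import zify.

Section Proof4.
Local Set Implicit Arguments.
Local Unset Strict Implicit.
Variables (V : eqType) (n m t : nat) (H : {set 'I_n}).
Hypothesis Hn : 3 * t + 1 <= n.
Hypothesis Ht : #|~: H| <= t.
Variable vinit : 'I_n -> 'I_m -> option V.
Variables adv1 adv2 : 'I_n -> 'I_n -> option ('I_m -> option V).
Variable advB : nat -> 'I_n -> 'I_n -> option ('I_m -> bool).
Variable Hs : 'I_n -> nat -> nat.
Variable Hb : nat -> 'I_m -> bool.
Variable c : 'I_m.

Notation m1 := (@msg1 V n m H vinit adv1).
Notation m2 := (@msg2 V n m H vinit adv1 adv2).
Notation td := (@tilde V n m H vinit adv1).
Notation mo := (@mgc_out V n m H vinit adv1 adv2).
Notation cnt := (@cntV V n m).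
Notation cands := (@candsV V n m).

Lemma first_sat_some {T : Type} (p : pred T) s x :
  first_sat p s = Some x -> p x /\ List.In x s.
Proof.
rewrite /first_sat; elim: s => //= a s IH.
case: ifP => pa /=; first by case=> <-; split => //; left.
by move=> /IH [-> ?]; split => //; right.
Qed.

Lemma first_sat_none {T : Type} (p : pred T) s x :
  first_sat p s = None -> List.In x s -> ~~ p x.
Proof.
rewrite /first_sat; elim: s => //= a s IH.
case: ifP => pa //= /IH h [<-|/h] //; by rewrite pa.
Qed.

Arguments first_sat_some {T p s x}.
Arguments first_sat_none {T p s x}.

Lemma cnt_in msg i x :
  0 < cnt msg i x c -> List.In x (cands msg i c).
Proof.
rewrite /cntV card_gt0 => /set0Pn [j]; rewrite inE.
case e: (msg j i) => [w|] // /eqP wx.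
rewrite /candsV.
have : j \in enum 'I_n by rewrite mem_enum.
elim: (enum 'I_n) => //= k s IH; rewrite in_cons => /orP [/eqP <-|/IH h].
  by rewrite e /=; left.
by case: (omap _ _) => //= ?; right.
Qed.

Lemma card_honest (S : {set 'I_n}) : #|S| <= #|S :&: H| + t.
Proof.
rewrite -(cardsID H S).
have : #|S :\: H| <= #|~: H|.
  by apply: subset_leq_card; apply/subsetP => x; rewrite !inE => /andP [].
lia.
Qed.

Lemma exists_honest (S : {set 'I_n}) : t < #|S| -> exists2 j, j \in H & j \in S.
Proof.
move=> h; have := card_honest S => h2.
have : 0 < #|S :&: H| by lia.
rewrite card_gt0 => /set0Pn [j]; rewrite inE => /andP [a b]; by exists j.
Qed.

Arguments exists_honest {S}.

Lemma tilde_cnt j y : td j c = Some y -> (2 * n) %/ 3 < cnt m1 j (Some y) c.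
Proof.
rewrite /tilde; case e: (@first_sat (option V) _ (cands m1 j c)) => [z|] //= zy.
by subst z; have [] := first_sat_some e.
Qed.

Lemma tilde_agree j j' y y' : td j c = Some y -> td j' c = Some y' -> y = y'.
Proof.
move=> /tilde_cnt h1 /tilde_cnt h2.
move: h1 h2; rewrite /cntV.
set S := [set _ | _]; set S' := [set _ | _] => h1 h2.
have hU := cardsU S S'.
have hn : #|S :|: S'| <= n by apply: leq_trans (max_card _) _; rewrite card_ord.
have hd : t < #|S :&: S'|.
  have : n = 3 * (n %/ 3) + n %% 3 by rewrite mulnC -divn_eq.
  have : n %% 3 < 3 by rewrite ltn_mod.
  lia.
have [k kH] := exists_honest hd.
rewrite !inE /msg1 kH => /andP [/eqP -> /eqP]; by case.
Qed.

Lemma step2_honest i y : y != None -> n %/ 3 < cnt m2 i y c ->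
  exists2 j, j \in H & td j c = y.
Proof.
move=> yN h.
have ht : t < cnt m2 i y c by lia.
have [j jH] := exists_honest ht.
rewrite inE /msg2 jH => /eqP e; by exists j.
Qed.

Lemma step2_unique i i' x y : x != None -> y != None ->
  n %/ 3 < cnt m2 i x c -> n %/ 3 < cnt m2 i' y c -> x = y.
Proof.
move=> xN yN hx hy.
have [j jH ej] := step2_honest xN hx.
have [j' jH' ej'] := step2_honest yN hy.
case: x xN ej hx => // a _ ej _; case: y yN ej' hy => // b _ ej' _.
by rewrite (tilde_agree ej ej').
Qed.

Lemma cnt_transfer i i' x : cnt m2 i x c <= cnt m2 i' x c + t.
Proof.
rewrite /cntV; set S := [set _ | _].
apply: (leq_trans (card_honest S)); rewrite leq_add2r.
apply: subset_leq_card; apply/subsetP => j; rewrite !inE /msg2.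
by case: (j \in H); rewrite ?andbT ?andbF.
Qed.

Lemma grade2_out i0 i : i0 \in H -> (mo i0 c).2 = 2 ->
  (mo i0 c).1 <> None /\ (mo i c).1 = (mo i0 c).1.
Proof.
move=> _.
rewrite /mgc_out.
case e0: (@first_sat (option V) _ (cands m2 i0 c)) => [x|] /=; last first.
  by case: (first_sat _ _) => [?|] .
move=> _; have [/andP [xN hx] _] := first_sat_some e0.
split; first by apply/eqP.
have hx1 : n %/ 3 < cnt m2 i0 x c.
  apply: leq_ltn_trans hx; apply: leq_div2r; lia.
case e: (@first_sat (option V) _ (cands m2 i c)) => [y|] /=.
  have [/andP [yN hy] _] := first_sat_some e.
  have hy1 : n %/ 3 < cnt m2 i y c.
    apply: leq_ltn_trans hy; apply: leq_div2r; lia.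
  exact: step2_unique yN xN hy1 hx1.
have hxi : n %/ 3 < cnt m2 i x c.
  have := cnt_transfer i0 i x.
  have : n = 3 * (n %/ 3) + n %% 3 by rewrite mulnC -divn_eq.
  have : n %% 3 < 3 by rewrite ltn_mod.
  lia.
case e1: (@first_sat (option V) _ (cands m2 i c)) => [y|] /=.
  have [/andP [yN hy] _] := first_sat_some e1.
  exact: step2_unique yN xN hy hx1.
have hin : List.In x (cands m2 i c) by apply: cnt_in; lia.
by have := first_sat_none e1 hin; rewrite xN hxi.
Qed.

Notation bex := (@bexec V n m H vinit adv1 adv2 advB Hs Hb).

Lemma all_one k :
  (forall i, i \in H -> (mo i c).2 != 2) ->
  forall i, i \in H -> @bb m (bex k i) c = true.
Proof.
move=> h0; elim: k => [|k IH] i iH /=; first by rewrite /binit /= h0.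
rewrite /bstep; case: ifP => _; first exact: IH.
rewrite /= /upd.
case: ifP => _; first exact: IH.
set st := bex k.
have c0 : @cntB n m H advB st k i false c <= t.
  apply: leq_trans Ht; apply: subset_leq_card; apply/subsetP => j.
  rewrite !inE /msgB; case: ifP => // jH; by rewrite IH.
have c1 : #|H| <= @cntB n m H advB st k i true c.
  apply: subset_leq_card; apply/subsetP => j jH.
  by rewrite !inE /msgB jH IH.
have hc : #|H| + #|~: H| = n by rewrite cardsC card_ord.
have -> : gt_two_thirds n (@cntB n m H advB st k i false c) = false.
  by apply/negbTE; rewrite /gt_two_thirds -leqNgt; lia.
have -> : gt_two_thirds n (@cntB n m H advB st k i true c) = true.
  by rewrite /gt_two_thirds; lia.
by case: (k %% 3) => [|[|?]].
Qed.

End Proof4.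

Theorem lemma4 (V : eqType) (n m t : nat) (H : {set 'I_n})
  (Hn : 3 * t + 1 <= n) (Ht : #|~: H| <= t)
  (vinit : 'I_n -> 'I_m -> option V)
  (adv1 adv2 : 'I_n -> 'I_n -> option ('I_m -> option V))
  (advB : nat -> 'I_n -> 'I_n -> option ('I_m -> bool))
  (Hs : 'I_n -> nat -> nat) (Hb : nat -> 'I_m -> bool)
  (K : nat) (c : 'I_m) :
  (forall i, i \in H ->
     @bh m (@bexec V n m H vinit adv1 adv2 advB Hs Hb K i) /\
     @bb m (@bexec V n m H vinit adv1 adv2 advB Hs Hb K i) c = false) ->
  exists v : V, forall i, i \in H ->
     @mba_out V n m H vinit adv1 adv2 advB Hs Hb K i c = Some v.
Proof.
move=> hyp.
have hc : #|H| + #|~: H| = n by rewrite cardsC card_ord.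
have hH : 0 < #|H| by lia.
have [i1 i1H] : exists i1, i1 \in H by move: hH; rewrite card_gt0 => /set0Pn.
case: (boolP [exists i0, (i0 \in H) && ((@mgc_out V n m H vinit adv1 adv2 i0 c).2 == 2)]).
  move=> /existsP [i0 /andP [i0H /eqP g2]].
  have [hN _] := @grade2_out V n m t H Hn Ht vinit adv1 adv2 c i0 i0 i0H g2.
  case e: (@mgc_out V n m H vinit adv1 adv2 i0 c).1 hN => [v|] // _.
  exists v => i iH; rewrite /mba_out (proj2 (hyp i iH)).
  by have [_ ->] := @grade2_out V n m t H Hn Ht vinit adv1 adv2 c i0 i i0H g2.
rewrite negb_exists => /forallP h0.
have h0' : forall i, i \in H -> (@mgc_out V n m H vinit adv1 adv2 i c).2 != 2.
  by move=> i iH; have := h0 i; rewrite iH.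
have := @all_one V n m t H Hn Ht vinit adv1 adv2 advB Hs Hb c K h0' i1 i1H.
by rewrite (proj2 (hyp i1 i1H)).
Qed.
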